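(* Let $A=[a_{ij}]\in M_{m,n}(\mathbb{R})$ have rank $r>1$ and be diagonally eliminable up to $r$, and let $k$ be an integer with $0\leq k<r$. Then $A^{(2k)}=[a^{(2k)}_{ij}]$ has as its first $k$ columns the first $k$ columns of the $m\times m$ identity matrix (i.e. $a^{(2k)}_{ij}=\delta_{ij}$ for $1\leq j\leq k$), and for $k+1\leq j\leq n$, $$a^{(2k)}_{ij}=\begin{cases}(-1)^{k+i}\dfrac{m^{1\dots k}_{1\dots i-1,\,i+1\dots k,\,j}}{m_k} & \text{if } 1\leq i\leq k,\\[2mm] \dfrac{m^{1\dots k\, i}_{1\dots k\, j}}{m_k} & \text{if } k+1\leq i\leq m.\end{cases}$$
   Context: Gauss-Jordan procedure: for $A\in M_{m,n}(\mathbb{R})$ set $A^{(0)}=A$. For $k\geq 0$, if $A^{(2k)}=[a^{(2k)}_{ij}]$ is defined and $a^{(2k)}_{k+1,k+1}\neq 0$, let $\mathcal{G}_{2k+1}$ be the $m\times m$ diagonal matrix with all diagonal entries $1$ except the $(k+1,k+1)$ entry, which is $1/a^{(2k)}_{k+1,k+1}$, and set $A^{(2k+1)}=\mathcal{G}_{2k+1}A^{(2k)}=[a^{(2k+1)}_{ij}]$; then let $\mathcal{G}_{2k+2}=[g_{ij}]_{m\times m}$ with $g_{ii}=1$, $g_{i,k+1}=-a^{(2k+1)}_{i,k+1}$ for $i\neq k+1$, and all other entries $0$, and set $A^{(2k+2)}=\mathcal{G}_{2k+2}A^{(2k+1)}$. A matrix $A$ of rank $r\geq 1$ is diagonally eliminable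 up to $r$ if for each $k=1,\dots,r$ the matrix $A^{(2k-2)}$ is defined and $a^{(2k-2)}_{kk}\neq 0$. Minors: for $1\leq i_1<\dots<i_p\leq m$, $1\leq j_1<\dots<j_p\leq n$, $m^{i_1\dots i_p}_{j_1\dots j_p}$ is the determinant of the submatrix of $A$ with rows $i_1,\dots,i_p$ and columns $j_1,\dots,j_p$; thus $m^{1\dots k}_{1\dots i-1,\,i+1\dots k,\,j}$ uses rows $1,\dots,k$ and columns $1,\dots,k$ with $i$ removed and $j$ appended, and $m^{1\dots k\,i}_{1\dots k\,j}$ uses rows $1,\dots,k,i$ and columns $1,\dots,k,j$. $m_k=m^{1\dots k}_{1\dots k}$ and $m_0=1$. *)

(* Defs.v *)
From HB Require Import structures.
From mathcomp Require Import all_boot all_order all_algebra.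
From mathcomp Require Import all_classical all_reals.
Set Implicit Arguments. Unset Strict Implicit. Unset Printing Implicit Defensive.
Import Order.TTheory GRing.Theory Num.Theory.
Local Open Scope ring_scope.

(* All indices below are 0-based: paper's row/column i corresponds to i-1 here. *)

(* entry of a matrix at nat indices (0 outside the range) *)
Definition ent (R : ringType) (m n : nat) (A : 'M[R]_(m, n)) (i j : nat) : R :=
  match @insub nat (fun x => x < m)%N 'I_m i, @insub nat (fun x => x < n)%N 'I_n j with
  | Some i', Some j' => A i' j'
  | _, _ => 0
  end.

Definition GJ_G1 (R : fieldType) (m n : nat) (A : 'M[R]_(m, n)) (k : nat) : 'M[R]_m :=
  \matrix_(i < m, l < m)
    (if i == l then (if (i == k :> nat) then (ent A k k)^-1 else 1) else 0).

Definition GJ_G2 (R : fieldType) (m n : nat) (B : 'M[R]_(m, n)) (k : nat) : 'M[R]_m :=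
  \matrix_(i < m, l < m)
    (if i == l then 1 else if (l == k :> nat) then - ent B i l else 0).

(* A^{(2k)} *)
Fixpoint GJ2 (R : fieldType) (m n : nat) (A : 'M[R]_(m, n)) (k : nat) : 'M[R]_(m, n) :=
  match k with
  | 0 => A
  | k'.+1 =>
      let A0 := GJ2 A k' in
      let A1 := GJ_G1 A0 k' *m A0 in
      GJ_G2 A1 k' *m A1
  end.

Definition GJ (R : fieldType) (m n : nat) (A : 'M[R]_(m, n)) (p : nat) : 'M[R]_(m, n) :=
  if odd p then GJ_G1 (GJ2 A p./2) p./2 *m GJ2 A p./2 else GJ2 A p./2.

Definition diag_elim (R : fieldType) (m n : nat) (A : 'M[R]_(m, n)) (r : nat) : Prop :=
  forall k : nat, (1 <= k <= r)%N -> ent (GJ A (2 * k - 2)) k.-1 k.-1 != 0.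

Definition minor (R : comRingType) (m n : nat) (A : 'M[R]_(m, n)) (rs cs : seq nat) : R :=
  \det (\matrix_(a < size rs, b < size rs) ent A (nth 0%N rs a) (nth 0%N cs b)).

Definition lead_minor (R : comRingType) (m n : nat) (A : 'M[R]_(m, n)) (k : nat) : R :=
  minor A (iota 0 k) (iota 0 k).

(* Main.v *)
Require Import Defs.
From HB Require Import structures.
From mathcomp Require Import all_boot all_order all_algebra.
From mathcomp Require Import all_classical all_reals.
From mathcomp Require Import zify.
Import Order.TTheory GRing.Theory Num.Theory.
Local Open Scope ring_scope.
Set Implicit Arguments. Unset Strict Implicit.

Section GJ.
Variable R : fieldType.

Lemma entE m n (A : 'M[R]_(m, n)) (i : 'I_m) (j : 'I_n) : ent A i j = A i j.
Proof. by rewrite /ent !valK. Qed.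

Lemma ent_outl m n (A : 'M[R]_(m, n)) x y : (m <= x)%N -> ent A x y = 0.
Proof. by move=> h; rewrite /ent insubN // -leqNgt. Qed.

Lemma ent_outr m n (A : 'M[R]_(m, n)) x y : (n <= y)%N -> ent A x y = 0.
Proof. by move=> h; rewrite /ent (insubN 'I_n (x:=y)) -?leqNgt //; case: insub. Qed.

Lemma ent_nz m n (A : 'M[R]_(m, n)) x y : ent A x y != 0 -> (x < m)%N /\ (y < n)%N.
Proof.
move=> h; split; rewrite ltnNge; apply/negP => h'; move: h.
  by rewrite ent_outl ?eqxx.
by rewrite ent_outr ?eqxx.
Qed.

Lemma ent_mul m n p (E : 'M[R]_(m, n)) (A : 'M[R]_(n, p)) x y :
  ent (E *m A) x y = \sum_(l < n) ent E x l * ent A l y.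
Proof.
case: (ltnP x m) => hx; last by rewrite ent_outl // big1 // => l _; rewrite ent_outl // mul0r.
case: (ltnP y p) => hy; last by rewrite ent_outr // big1 // => l _; rewrite (ent_outr _ _ hy) mulr0.
rewrite -[x]/(val (Ordinal hx)) -[y]/(val (Ordinal hy)) entE mxE.
by apply: eq_bigr => l _; rewrite !entE.
Qed.

Lemma sum_delta m (F : 'I_m -> R) (l : 'I_m) : \sum_(p < m) F p * (p == l)%:R = F l.
Proof.
rewrite (bigD1 l) //= eqxx mulr1 big1 ?addr0 // => p /negbTE ->; by rewrite mulr0.
Qed.

Lemma GJ_even m n (A : 'M[R]_(m, n)) p : GJ A (2 * p) = GJ2 A p.
Proof. by rewrite /GJ mul2n odd_double doubleK. Qed.

Variables (m n : nat) (A : 'M[R]_(m, n)).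

Definition Inv k (B : 'M[R]_(m, n)) (E : 'M[R]_m) :=
  [/\ (k <= m)%N, (k <= n)%N, B = E *m A,
      (forall i l : 'I_m, (k <= l)%N -> E i l = (i == l)%:R) &
      (forall (i : 'I_m) (j : 'I_n), (j < k)%N -> B i j = (i == j :> nat)%:R)].

Lemma L1 (B : 'M[R]_(m, n)) k (kk : 'I_m) : val kk = k -> forall p j,
  (GJ_G1 B k *m B) p j = if p == kk then (ent B k k)^-1 * B p j else B p j.
Proof.
move=> hk p j; rewrite mxE (bigD1 p) //= big1 ?addr0 => [|q /negbTE hq]; last first.
  by rewrite mxE eq_sym hq mul0r.
rewrite mxE eqxx -hk; case: (p =P kk) => [->|/eqP hp]; rewrite ?eqxx //.
by rewrite ifN ?mul1r // (inj_eq val_inj).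
Qed.

Lemma L2 (C : 'M[R]_(m, n)) k (kk : 'I_m) (kj : 'I_n) : val kk = k -> val kj = k ->
  forall i j,
  (GJ_G2 C k *m C) i j = if i == kk then C i j else C i j - C i kj * C kk j.
Proof.
move=> hk hj i j; rewrite mxE (bigD1 i) //= mxE eqxx mul1r.
case: (i =P kk) => [->|/eqP hik].
  rewrite big1 ?addr0 // => q hq; rewrite mxE eq_sym (negbTE hq) -hk (inj_eq val_inj).
  by rewrite (negbTE hq) mul0r.
rewrite (bigD1 kk) 1?eq_sym //= big1 ?addr0 => [|q /andP [hqi hqk]]; last first.
  by rewrite mxE eq_sym (negbTE hqi) -hk (inj_eq val_inj) (negbTE hqk) mul0r.
rewrite mxE (negbTE hik).
have -> : ent C i kk = C i kj by rewrite -entE /= hk hj.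
by rewrite ?hk ?eqxx ?mulNr.
Qed.

Lemma inv_GJ2 k : (forall p, (p < k)%N -> ent (GJ2 A p) p p != 0) ->
  exists E, Inv k (GJ2 A k) E.
Proof.
elim: k => [_|k IH hp].
  exists 1%:M; split => //; first by rewrite mul1mx.
  by move=> i l _; rewrite mxE.
have [E [_ _ hB hE hI]] := IH (fun p hp' => hp p (ltnW hp')).
have hpiv := hp k (ltnSn k).
have [hkm hkn] := ent_nz hpiv.
set B := GJ2 A k in hB hE hI hpiv *.
pose kk : 'I_m := Ordinal hkm. pose kj : 'I_n := Ordinal hkn.
have epiv : ent B k k = B kk kj by rewrite -entE.
set C := GJ_G1 B k *m B.
have hC := L1 B (erefl : val kk = k).
have hB' := L2 C (erefl : val kk = k) (erefl : val kj = k).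
exists ((GJ_G2 C k *m GJ_G1 B k) *m E); split => //.
- by rewrite /= -/B -/C /C hB !mulmxA.
- move=> i l hl.
  have hlk : (l == k :> nat) = false by apply/negbTE; rewrite neq_ltn hl orbT.
  rewrite mxE (eq_bigr (fun p => (GJ_G2 C k *m GJ_G1 B k) i p * (p == l)%:R)).
    rewrite sum_delta mxE (eq_bigr (fun p => GJ_G2 C k i p * (p == l)%:R)).
      by rewrite sum_delta mxE hlk; case: (i == l).
    by move=> p _; rewrite !mxE; case: (p =P l) => [->|]; rewrite ?hlk ?eqxx.
  by move=> p _; rewrite hE // ltnW.
- move=> i j hj; rewrite /= -/B -/C hB'.
  have hC2 : forall p (j : 'I_n), (j < k)%N -> C p j = B p j.
    move=> p j' hj'; rewrite hC; case: (p =P kk) => [->|] //.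
    by rewrite hI // /= (gtn_eqF hj') mulr0.
  case: (ltnP j k) => hjk.
    rewrite (hC2 i j) // (hC2 kk j) // (hI kk) // /= (gtn_eqF hjk) mulr0 subr0 hI //; by case: (i == kk).
  have -> : j = kj by apply: val_inj => /=; apply/eqP; rewrite eqn_leq hjk -ltnS hj.
  have hCk : C kk kj = 1 by rewrite hC eqxx -epiv mulVf.
  case: (i =P kk) => [->|/eqP hik]; first by rewrite hCk eqxx.
  rewrite hCk mulr1 subrr.
  by move: hik; rewrite -(inj_eq val_inj) /= => /negbTE ->.
Qed.


Definition subm p q (M : 'M[R]_(p, q)) N (rf cf : nat -> nat) : 'M[R]_N :=
  \matrix_(a < N, b < N) ent M (rf a) (cf b).

Lemma minor_N (rs cs : seq nat) N : size rs = N ->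
  minor A rs cs = \det (subm A N (nth 0%N rs) (nth 0%N cs)).
Proof. by move=> h; case: N / h. Qed.

Lemma subm_ext p q (M : 'M[R]_(p, q)) N rf cf rf' cf' :
  (forall a, (a < N)%N -> rf a = rf' a) -> (forall a, (a < N)%N -> cf a = cf' a) ->
  subm M N rf cf = subm M N rf' cf'.
Proof. by move=> h1 h2; apply/matrixP => a b; rewrite !mxE h1 ?h2. Qed.

Lemma subm_mul (B : 'M[R]_(m, n)) (E : 'M[R]_m) N (rf cf : nat -> nat) :
  (forall a : 'I_N, forall y, ent B (rf a) y = \sum_(c < N) ent E (rf a) (rf c) * ent A (rf c) y) ->
  subm B N rf cf = subm E N rf rf *m subm A N rf cf.
Proof.
move=> h; apply/matrixP => a b; rewrite !mxE h; apply: eq_bigr => c _; by rewrite !mxE.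
Qed.

Section Fixk.
Variables (k : nat) (B : 'M[R]_(m, n)) (E : 'M[R]_m).
Hypothesis hInv : Inv k B E.

Lemma hEn x l : (k <= l)%N -> (l < m)%N -> ent E x l = (x == l)%:R.
Proof.
case: hInv => hkm hkn hB hE hI hl hlm.
case: (ltnP x m) => hx; last by rewrite ent_outl // gtn_eqF // (leq_trans hlm).
by rewrite -[x]/(val (Ordinal hx)) -[l]/(val (Ordinal hlm)) entE hE.
Qed.

Lemma hBn x y : (x < m)%N -> (y < k)%N -> ent B x y = (x == y)%:R.
Proof.
case: hInv => hkm hkn hB hE hI hx hy.
have hyn : (y < n)%N by apply: leq_trans hkn.
by rewrite -[x]/(val (Ordinal hx)) -[y]/(val (Ordinal hyn)) entE hI.
Qed.

Lemma split_sum x y : ent B x y =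
  \sum_(c < k) ent E x c * ent A c y + \sum_(l < m | (k <= l)%N) ent E x l * ent A l y.
Proof.
case: hInv => hkm hkn hB hE hI.
rewrite hB ent_mul (bigID (fun l : 'I_m => (l < k)%N)) /=.
rewrite (big_ord_widen _ (fun c => ent E x c * ent A c y) hkm).
by congr (_ + _); apply: eq_bigl => l; rewrite -leqNgt.
Qed.

Lemma rows_low x y : (x < k)%N ->
  ent B x y = \sum_(c < k) ent E x c * ent A c y.
Proof.
move=> hx; rewrite split_sum [X in _ + X]big1 ?addr0 // => l hl.
by rewrite hEn ?ltn_ord // ltn_eqF ?mul0r // (leq_trans hx).
Qed.

Lemma rows_high (i : 'I_m) y : (k <= i)%N ->
  ent B i y = \sum_(c < k) ent E i c * ent A c y + ent A i y.
Proof.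
move=> hi; rewrite split_sum (bigD1 i) //= hEn ?ltn_ord // eqxx mul1r [X in _ + (_ + X)]big1 ?addr0 //.
move=> l /andP [hl hli]; rewrite hEn ?ltn_ord // (inj_eq val_inj) eq_sym (negbTE hli).
by rewrite mul0r.
Qed.

End Fixk.

Lemma det_shift N (M : 'M[R]_N) (i jl : 'I_N) : val jl = N.-1 ->
  (forall a b : 'I_N, (b < N.-1)%N -> M a b = (val a == bump i b)%:R) ->
  \det M = (-1) ^+ (i + N.-1) * M i jl.
Proof.
case: N M i jl => [|N] M i jl; first by case: i.
move=> hjl hM; have -> : jl = ord_max by apply: val_inj.
rewrite (expand_det_row _ i) (bigD1 ord_max) //= big1 ?addr0; last first.
  move=> b hb; rewrite hM ?(negbTE (neq_bump _ _)) ?mul0r //.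
  by rewrite ltn_neqAle -ltnS ltn_ord andbT; move: hb; rewrite -(inj_eq val_inj).
rewrite /cofactor mulrCA; congr (_ * _).
have -> : row' i (col' ord_max M) = 1%:M.
  have hb : forall b : 'I_N, bump N b = b by move=> b; rewrite /bump leqNgt ltn_ord.
  apply/matrixP => a b; rewrite !mxE hM /= hb //.
  by rewrite (inj_eq (can_inj (bumpK i))).
by rewrite det1 mulr1.
Qed.

Lemma det_lastcol N (M : 'M[R]_N.+1) :
  (forall a, M a ord_max = (a == ord_max)%:R) ->
  \det M = \det (row' ord_max (col' ord_max M)).
Proof.
move=> hM; rewrite (expand_det_col _ ord_max) (bigD1 ord_max) //= big1 ?addr0; last first.
  by move=> a /negbTE ha; rewrite hM ha mul0r.
by rewrite hM eqxx mul1r /cofactor -signr_odd addnn odd_double expr0 mul1r.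
Qed.


Section Fixk2.
Variables (k : nat) (B : 'M[R]_(m, n)) (E : 'M[R]_m).
Hypothesis hInv : Inv k B E.

Let hkm : (k <= m)%N. Proof. by case: hInv. Qed.
Let hkn : (k <= n)%N. Proof. by case: hInv. Qed.

Definition DE := \det (subm E k id id).

Lemma lead_rel : DE * lead_minor A k = 1.
Proof.
rewrite /lead_minor (minor_N (iota 0 k) (size_iota 0 k)).
rewrite (subm_ext A (rf' := id) (cf' := id)); try by move=> a ha; rewrite nth_iota.
rewrite /DE -det_mulmx -(subm_mul (B := B)); last by move=> a y; exact: rows_low.
rewrite -(det1 R k); congr (\det _); apply/matrixP => a b; rewrite !mxE /=.
by rewrite (hBn hInv) // (leq_trans _ hkm).
Qed.

Lemma lead_nz : lead_minor A k != 0.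
Proof. by apply/negP => /eqP h; move: lead_rel; rewrite h mulr0 => /eqP; rewrite eq_sym oner_eq0. Qed.

Lemma DE_inv : DE = (lead_minor A k)^-1.
Proof. by rewrite -[DE]mulr1 -(mulfV lead_nz) mulrA lead_rel mul1r. Qed.

Lemma case_high (i : 'I_m) (j : 'I_n) : (k <= i)%N ->
  B i j = minor A (rcons (iota 0 k) i) (rcons (iota 0 k) j) / lead_minor A k.
Proof.
move=> hi.
pose rfi a := if (a < k)%N then a else val i.
pose rfj a := if (a < k)%N then a else val j.
have hsz : size (rcons (iota 0 k) i) = k.+1 by rewrite size_rcons size_iota.
rewrite (minor_N (rcons (iota 0 k) j) hsz) (subm_ext A (rf' := rfi) (cf' := rfj)); first last.
- move=> a ha; rewrite nth_rcons size_iota /rfj; case: ifP => h; first by rewrite nth_iota.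
  by have -> : a == k by rewrite eqn_leq -ltnS ha leqNgt h.
- move=> a ha; rewrite nth_rcons size_iota /rfi; case: ifP => h; first by rewrite nth_iota.
  by have -> : a == k by rewrite eqn_leq -ltnS ha leqNgt h.
have hmul : subm B k.+1 rfi rfj = subm E k.+1 rfi rfi *m subm A k.+1 rfi rfj.
  apply: subm_mul => a y; rewrite big_ord_recr /= /rfi ltnn.
  under eq_bigr => c _ do rewrite /= ltn_ord.
  case: ifP => ha; first by rewrite (rows_low hInv) // (hEn hInv) ?ltn_ord // ltn_eqF ?mul0r ?addr0 // (leq_trans ha).
  by rewrite (rows_high hInv) // (hEn hInv) ?ltn_ord // eqxx mul1r.
have hdetB : \det (subm B k.+1 rfi rfj) = B i j.
  rewrite (det_shift (i := ord_max) (jl := ord_max)) //=; last first.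
    move=> a b hb0; have hb : (b < k)%N by exact: hb0.
    rewrite mxE /rfi /rfj.
    have hbb : bump k b = b by rewrite /bump leqNgt hb.
    rewrite hbb; case: ifP => ha; (case: ifP => hb2; last by move/negbT/negP: hb2; case; exact: hb).
      by rewrite (hBn hInv) // (leq_trans ha).
    rewrite (hBn hInv) ?ltn_ord // !gtn_eqF //; first by rewrite (leq_trans hb) // leqNgt ha.
    exact: (leq_trans hb hi).
  rewrite mxE /rfi /rfj ltnn entE -signr_odd addnn odd_double expr0 mul1r //.
have hdetE : \det (subm E k.+1 rfi rfi) = DE.
  rewrite det_lastcol; last first.
    move=> a; rewrite mxE /rfi ltnn; case: ifP => ha.
      rewrite (hEn hInv) ?ltn_ord // ltn_eqF; last by rewrite (leq_trans ha).
      by have -> : (a == ord_max) = false by rewrite -(inj_eq val_inj) /= ltn_eqF.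
    have -> : a = ord_max by apply: val_inj => /=; apply/eqP; rewrite eqn_leq -ltnS ltn_ord leqNgt ha.
    by rewrite (hEn hInv) ?ltn_ord // !eqxx.
  rewrite /DE; congr (\det _); apply/matrixP => a b; rewrite !mxE.
  have hl : forall c : 'I_k, rfi (lift ord_max c) = c.
    by move=> c; rewrite /rfi lift_max /= ltn_ord.
  by rewrite !hl.
by rewrite -hdetB hmul det_mulmx hdetE DE_inv mulrC.
Qed.

Lemma case_low (i : 'I_m) (j : 'I_n) : (i < k)%N ->
  B i j = (-1) ^+ (k + i.+1) *
            minor A (iota 0 k) (iota 0 i ++ iota i.+1 (k - i.+1) ++ [:: val j])
            / lead_minor A k.
Proof.
move=> hik.
pose csf a := if (a < k.-1)%N then bump i a else val j.
rewrite (minor_N (iota 0 i ++ iota i.+1 (k - i.+1) ++ [:: val j]) (size_iota 0 k)).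
rewrite (subm_ext A (rf' := id) (cf' := csf)); first last.
- move=> a ha; rewrite /csf nth_cat size_iota; case: ifP => hai.
    rewrite nth_iota // add0n /bump.
    have -> : (a < k.-1)%N by lia.
    have -> : (i <= a)%N = false by lia.
    by [].
  rewrite nth_cat size_iota; case: ifP => hai2.
    rewrite nth_iota // /bump.
    have -> : (a < k.-1)%N by lia.
    have -> : (i <= a)%N by lia.
    lia.
  have -> : (a < k.-1)%N = false by lia.
  by have -> : (a - i - (k - i.+1) = 0)%N by lia.
- by move=> a ha; rewrite nth_iota.
have hmul : subm B k id csf = subm E k id id *m subm A k id csf.
  by apply: subm_mul => a y; apply: (rows_low hInv).
have hk1 : (k.-1 < k)%N by lia.
have hdet : \det (subm B k id csf) = (-1) ^+ (i + k.-1) * B i j.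
  rewrite (det_shift (i := Ordinal hik) (jl := Ordinal hk1)) //.
    by rewrite mxE /csf /= ltnn entE.
  move=> a b hb; rewrite mxE /csf hb /= (hBn hInv) //.
    by rewrite (leq_trans _ hkm).
  rewrite /bump; case: (i <= b)%N; lia.
rewrite hmul det_mulmx -/DE DE_inv in hdet.
set L := lead_minor A k in hdet *.
set M := \det (subm A k id csf) in hdet *.
have hM : M = L * ((-1) ^+ (i + k.-1) * B i j).
  by rewrite -hdet mulrA mulfV ?mul1r // lead_nz.
have hs : (-1) ^+ (k + i.+1) * (-1) ^+ (i + k.-1) = 1 :> R.
  rewrite -exprD -signr_odd.
  have -> : (k + i.+1 + (i + k.-1) = (i + k.-1).*2 + 2)%N by lia.
  by rewrite oddD odd_double.
by rewrite hM mulrCA mulrC mulKf ?lead_nz // mulrA hs mul1r.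
Qed.

End Fixk2.
End GJ.

Unset Implicit Arguments.
Set Strict Implicit.

Theorem theorem2p6 (R : realType) (m n : nat) (A : 'M[R]_(m, n)) (r k : nat) :
  \rank A = r -> (1 < r)%N -> diag_elim A r -> (k < r)%N ->
  (forall (i : 'I_m) (j : 'I_n), (j < k)%N ->
      GJ A (2 * k) i j = (i == j :> nat)%:R) /\
  (forall (i : 'I_m) (j : 'I_n), (k <= j)%N ->
      GJ A (2 * k) i j =
        if (i < k)%N then
          (-1) ^+ (k + i.+1) *
            minor A (iota 0 k) (iota 0 i ++ iota i.+1 (k - i.+1) ++ [:: val j])
            / lead_minor A k
        else
          minor A (rcons (iota 0 k) (val i)) (rcons (iota 0 k) (val j))
            / lead_minor A k).
Proof.
move=> _ _ hde hkr.
have hp : forall p, (p < k)%N -> ent (GJ2 A p) p p != 0.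
  move=> p hpk; have := hde p.+1.
  have -> : (2 * p.+1 - 2 = 2 * p)%N by lia.
  rewrite GJ_even /=; apply; lia.
have [E hInv] := inv_GJ2 hp.
rewrite GJ_even; split.
  by move=> i j hj; case: hInv => _ _ _ _ hI; exact: hI.
move=> i j hj; case: ifP => hik; first exact: (case_low hInv).
by apply: (case_high hInv); rewrite leqNgt hik.
Qed.
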